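(* Let $(S,\mathcal C)$ be a connected connectoid and $T$ a normal tree of $(S,\mathcal C)$ rooted at $r$. Suppose every component in $\mathcal K(S\setminus V(T))$ has finite adhesion to $V(T)$. For every $K\in\mathcal K(S\setminus V(T))$ let $T_K$ be a (possibly empty) normal tree of the induced subconnectoid on $K$. Then there is a normal tree $T'$ of $(S,\mathcal C)$ rooted at $r$ with $T\subseteq T'$ such that $T'-T$ is the disjoint union of the trees $T_K$, $K\in\mathcal K(S\setminus V(T))$. Furthermore, if $T$ and all $T_K$ are rayless, then $T'$ is rayless.
   Context: A connectoid is given by a set $S$ and a set $\mathcal F$ of finite subsets of $S$ such that (i) $F\cup F'\in\mathcal F$ whenever $F,F'\in\mathcal F$ and $F\cap F'\neq\emptyset$, and (ii) $\emptyset\in\mathcal F$ and $\{s\}\in\mathcal F$ for every $s\in S$. A set $C\subseteq S$ is connected if for all $x,y\in C$ there is $F\in\mathcal F$ with $F\subseteq C$ and $x,y\in F$; $\mathcal C$ is the set of connected sets; $(S,\mathcal C)$ is connected if $S\in\mathcal C$. For $S'\subseteq S$, a component of $S'$ is a maximal connected subset, $\mathcal K(S')$ is the set of components, and the induced subconnectoid on $S'$ is $(S',\mathcal C\cap\mathcal P(S'))$. A component $K\in\mathcal K(S\setminus\hat S)$ has finite adhesion to $\hat S$ if there is a finite $X\subseteq\hat S$ with $K\in\mathcal K(S\setminus X)$. A necklace is a connected set $N$ for which there is a family $(H_n)_{n\in\mathbb N}$ of finite connected sets with $N=\bigcup_n H_n$ and $H_i\cap H_j\neq\emptyset$ iff $|i-j|\le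 1$. For a rooted tree $T$ with tree order $\le_T$ and $t\in V(T)$, let $\mathrm{Down}^\circ_T(t)=\{x\in V(T):x<_T t\}$. A weak normal tree of $(S,\mathcal C)$ is a rooted undirected tree $T$ with $V(T)\subseteq S$ such that (1) for every $C\in\mathcal C$ and every two $\le_T$-incomparable $u,v\in C\cap V(T)$ there is $w\in C$ with $w\le_T u$ and $w\le_T v$, and (2) for all $u\le_T v$ in $V(T)$ there is $C\in\mathcal C$ containing $u,v$ with $C\cap\mathrm{Down}^\circ_T(u)=\emptyset$. It is a normal tree if moreover for every rooted ray $R$ of $T$ some necklace contains all but finitely many vertices of $R$. A tree is rayless if it contains no ray. *)

(* Defs.v *)
From Stdlib Require Import List Arith.
Import ListNotations.

Section Defs.
Variable S : Type.

Definition subset (A B : S -> Prop) : Prop := forall x, A x -> B x.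

Definition finite (A : S -> Prop) : Prop :=
  exists l : list S, forall x, A x -> In x l.

(* A connectoid on the ground type S, given by a family F of finite sets.
   Sets are predicates; we require F to be extensional (closed under
   extensional equality), as a family of sets is. *)
Definition is_connectoid (F : (S -> Prop) -> Prop) : Prop :=
  (forall A, F A -> finite A) /\
  (forall A B, (forall x, A x <-> B x) -> F A -> F B) /\
  (forall A B, F A -> F B -> (exists x, A x /\ B x) ->
     F (fun x => A x \/ B x)) /\
  F (fun _ => False) /\
  (forall s, F (fun x => x = s)).

Definition connected (F : (S -> Prop) -> Prop) (C : S -> Prop) : Prop :=
  forall x y, C x -> C y -> exists A, F A /\ subset A C /\ A x /\ A y.

Definition component (Conn : (S -> Prop) -> Prop) (S' K : S -> Prop) : Prop :=
  subset K S' /\ Conn K /\ (exists x, K x) /\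
  (forall K', subset K K' -> subset K' S' -> Conn K' -> subset K' K).

Definition finite_adhesion (Conn : (S -> Prop) -> Prop) (Shat K : S -> Prop)
  : Prop :=
  exists X, finite X /\ subset X Shat /\ component Conn (fun x => ~ X x) K.

Definition necklace (Conn : (S -> Prop) -> Prop) (N : S -> Prop) : Prop :=
  Conn N /\
  exists H : nat -> S -> Prop,
    (forall n, finite (H n) /\ Conn (H n)) /\
    (forall x, N x <-> exists n, H n x) /\
    (forall i j, (exists x, H i x /\ H j x) <-> (i <= Datatypes.S j /\ j <= Datatypes.S i)).

Record rtree := RTree { tv : S -> Prop; te : S -> S -> Prop; troot : S }.

Inductive tpath (E : S -> S -> Prop) : S -> list S -> S -> Prop :=
| tp_one x : tpath E x [x] x
| tp_cons x y l z : E x y -> tpath E y l z -> tpath E x (x :: l) z.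

Definition is_rtree (T : rtree) : Prop :=
  (forall x y, te T x y -> te T y x) /\
  (forall x y, te T x y -> tv T x /\ tv T y /\ x <> y) /\
  (forall u v, tv T u -> tv T v ->
     exists l, (tpath (te T) u l v /\ NoDup l) /\
       forall l', tpath (te T) u l' v /\ NoDup l' -> l' = l) /\
  ((exists x, tv T x) -> tv T (troot T)).

Definition tle (T : rtree) (x y : S) : Prop :=
  tv T y /\ exists l, tpath (te T) (troot T) l y /\ NoDup l /\ In x l.

Definition tlt (T : rtree) (x y : S) : Prop := tle T x y /\ x <> y.

Definition ray (T : rtree) (f : nat -> S) : Prop :=
  (forall n, te T (f n) (f (Datatypes.S n))) /\
  (forall m n, f m = f n -> m = n).

Definition rooted_ray (T : rtree) (f : nat -> S) : Prop :=
  ray T f /\ f 0 = troot T.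

Definition rayless (T : rtree) : Prop := forall f, ~ ray T f.

Definition weak_normal_tree (G : S -> Prop) (Conn : (S -> Prop) -> Prop)
  (T : rtree) : Prop :=
  is_rtree T /\ subset (tv T) G /\
  (forall C, Conn C -> forall u v, C u -> C v -> tv T u -> tv T v ->
     ~ tle T u v -> ~ tle T v u ->
     exists w, C w /\ tle T w u /\ tle T w v) /\
  (forall u v, tv T u -> tv T v -> tle T u v ->
     exists C, Conn C /\ C u /\ C v /\ (forall x, C x -> ~ tlt T x u)).

Definition normal_tree (G : S -> Prop) (Conn : (S -> Prop) -> Prop)
  (T : rtree) : Prop :=
  weak_normal_tree G Conn T /\
  forall f, rooted_ray T f ->
    exists N, necklace Conn N /\ exists n0, forall n, n0 <= n -> N (f n).

Definition induced_conn (Conn : (S -> Prop) -> Prop) (S' : S -> Prop)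
  (C : S -> Prop) : Prop := Conn C /\ subset C S'.

Definition subtree (T T' : rtree) : Prop :=
  subset (tv T) (tv T') /\ (forall x y, te T x y -> te T' x y).

End Defs.

Arguments subset {S}. Arguments finite {S}. Arguments is_connectoid {S}.
Arguments connected {S}. Arguments component {S}. Arguments finite_adhesion {S}.
Arguments necklace {S}. Arguments tv {S}. Arguments te {S}. Arguments troot {S}.
Arguments RTree {S}. Arguments is_rtree {S}. Arguments tle {S}. Arguments tlt {S}.
Arguments ray {S}. Arguments rooted_ray {S}. Arguments rayless {S}.
Arguments weak_normal_tree {S}. Arguments normal_tree {S}.
Arguments induced_conn {S}. Arguments subtree {S}. Arguments tpath {S}.

(* Main.v *)
Require Import Defs.
From Stdlib Require Import List Arith Lia Classical ClassicalEpsilon FunctionalExtensionality PropExtensionality.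
Import ListNotations.

Lemma tpath_head {U} (E : U -> U -> Prop) x l z :
  tpath E x l z -> exists l', l = x :: l'.
Proof. intros H; destruct H; eauto. Qed.

Lemma tpath_first_in {U} (E : U -> U -> Prop) x l z : tpath E x l z -> In x l.
Proof. intros H; destruct H; simpl; auto. Qed.

Lemma tpath_last_in {U} (E : U -> U -> Prop) x l z : tpath E x l z -> In z l.
Proof. induction 1; simpl; auto. Qed.

Lemma tpath_app {U} (E : U -> U -> Prop) x l1 y l2 z :
  tpath E x l1 y -> tpath E y (y :: l2) z -> tpath E x (l1 ++ l2) z.
Proof.
  induction 1; intros H2; simpl.
  - exact H2.
  - econstructor; eauto.
Qed.

Lemma tpath_snoc {U} (E : U -> U -> Prop) x l y z :
  tpath E x l y -> E y z -> tpath E x (l ++ [z]) z.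
Proof.
  intros H1 H2. apply tpath_app with y; auto. econstructor; eauto. constructor.
Qed.

Lemma tpath_rev {U} (E : U -> U -> Prop) x l z :
  (forall a b, E a b -> E b a) -> tpath E x l z -> tpath E z (rev l) x.
Proof.
  intros Hs; induction 1; simpl.
  - constructor.
  - apply tpath_snoc with y; auto.
Qed.

Lemma tpath_split {U} (E : U -> U -> Prop) u l v x :
  tpath E u l v -> In x l -> exists l1 l2, l = l1 ++ x :: l2 /\
    tpath E u (l1 ++ [x]) x /\ tpath E x (x :: l2) v.
Proof.
  induction 1; intros Hin.
  - destruct Hin as [<-|[]]. exists [], []. repeat split; constructor.
  - simpl in Hin. destruct (classic (x0 = x)) as [<-|Hne].
    + exists [], l. split; [reflexivity|]. split; [constructor|].
      econstructor; eauto.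
    + assert (In x l) as Hl by (destruct Hin; [congruence|auto]).
      destruct (IHtpath Hl) as (l1 & l2 & -> & P1 & P2).
      exists (x0 :: l1), l2. split; [reflexivity|]. split; [|auto].
      simpl. econstructor; eauto.
Qed.

Lemma tpath_nodup {U} (E : U -> U -> Prop) u l v :
  tpath E u l v -> exists l', tpath E u l' v /\ NoDup l'.
Proof.
  induction 1.
  - exists [x]. split; [constructor|]. repeat constructor. intros [].
  - destruct IHtpath as (l' & P & N).
    destruct (classic (In x l')) as [Hi|Hn].
    + destruct (tpath_split _ _ _ _ _ P Hi) as (l1 & l2 & -> & P1 & P2).
      exists (x :: l2). split; auto.
      apply NoDup_app_remove_l in N. auto.
    + exists (x :: l'). split. econstructor; eauto. constructor; auto.
Qed.

Lemma tpath_V {U} (E : U -> U -> Prop) (V : U -> Prop) u l v :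
  (forall a b, E a b -> V a /\ V b) -> tpath E u l v -> V u -> forall w, In w l -> V w.
Proof.
  intros HE; induction 1; intros Hu w Hw; simpl in Hw.
  - destruct Hw as [<-|[]]; auto.
  - destruct Hw as [<-|Hw]; auto. apply IHtpath; auto. apply (HE _ _ H).
Qed.

Definition PS {U} (V : U -> Prop) (E : U -> U -> Prop) (r : U) (p : U -> U) (d : U -> nat) : Prop :=
  V r /\ d r = 0 /\ (forall x, V x -> x <> r -> V (p x) /\ d x = S (d (p x))) /\
  (forall x y, E x y <-> V x /\ V y /\ ((x <> r /\ y = p x) \/ (y <> r /\ x = p y))).

Definition desc {U} (p : U -> U) (d : U -> nat) (x y : U) : Prop :=
  exists k, k <= d y /\ x = Nat.iter k p y.


Lemma ps_root {U} V E (r : U) p d x : PS V E r p d -> V x -> d x = 0 -> x = r.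
Proof.
  intros (H1 & H2 & H3 & H4) Hx Hd. destruct (classic (x = r)); auto.
  destruct (H3 x Hx H). lia.
Qed.

Lemma ps_iter {U} V E (r : U) p d y k : PS V E r p d -> V y -> k <= d y ->
  V (Nat.iter k p y) /\ d (Nat.iter k p y) = d y - k.
Proof.
  intros HP Hy. induction k; intros Hk; simpl.
  - split; auto; lia.
  - destruct IHk as [IV ID]; [lia|].
    assert (Nat.iter k p y <> r) as Hne.
    { intros Heq. destruct HP as (_ & H2 & _). rewrite Heq in ID. lia. }
    destruct HP as (_ & _ & H3 & _). destruct (H3 _ IV Hne) as [A B].
    split; auto. lia.
Qed.

Lemma ps_iter_root {U} V E (r : U) p d y : PS V E r p d -> V y -> Nat.iter (d y) p y = r.
Proof.
  intros HP Hy. destruct (ps_iter V E r p d y (d y) HP Hy (le_n _)) as [A B].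
  apply (ps_root V E r p d); auto. lia.
Qed.

Lemma desc_VD {U} V E (r : U) p d x y : PS V E r p d -> V y -> desc p d x y ->
  V x /\ d x <= d y /\ (d x = d y -> x = y).
Proof.
  intros HP Hy (k & Hk & ->). destruct (ps_iter V E r p d y k HP Hy Hk) as [A B].
  split; auto. split; [lia|]. intros Heq. assert (k = 0) by lia. subst; reflexivity.
Qed.

Lemma desc_refl {U} (p : U -> U) d y : desc p d y y.
Proof. exists 0. split; [lia|reflexivity]. Qed.

Lemma desc_trans {U} V E (r : U) p d x y z : PS V E r p d -> V z ->
  desc p d x y -> desc p d y z -> desc p d x z.
Proof.
  intros HP Hz (a & Ha & ->) (b & Hb & ->).
  destruct (ps_iter V E r p d z b HP Hz Hb) as [A B].
  exists (a + b). split; [lia|]. rewrite Nat.iter_add. reflexivity.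
Qed.

Lemma desc_antisym {U} V E (r : U) p d x y : PS V E r p d -> V y ->
  desc p d x y -> desc p d y x -> x = y.
Proof.
  intros HP Hy D1 D2. destruct (desc_VD V E r p d x y HP Hy D1) as (Vx & L1 & _).
  destruct (desc_VD V E r p d y x HP Vx D2) as (_ & L2 & Q). apply eq_sym, Q. lia.
Qed.

Lemma desc_same_depth {U} V E (r : U) p d a b v : PS V E r p d -> V v ->
  desc p d a v -> desc p d b v -> d a = d b -> a = b.
Proof.
  intros HP Hv (k1 & H1 & ->) (k2 & H2 & ->) Hd.
  destruct (ps_iter V E r p d v k1 HP Hv H1) as [_ B1].
  destruct (ps_iter V E r p d v k2 HP Hv H2) as [_ B2].
  assert (k1 = k2) by lia. subst; reflexivity.
Qed.

Lemma desc_parent {U} V E (r : U) p d z v : PS V E r p d -> V v ->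
  desc p d z v -> z <> r -> desc p d (p z) v.
Proof.
  intros HP Hv (k & Hk & ->) Hne.
  destruct (ps_iter V E r p d v k HP Hv Hk) as [A B].
  assert (k + 1 <= d v).
  { destruct (classic (k + 1 <= d v)); auto. exfalso. apply Hne.
    apply (ps_root V E r p d); auto. lia. }
  exists (S k). split; [lia|reflexivity].
Qed.

Lemma desc_of_parent {U} V E (r : U) p d u y : PS V E r p d -> V y -> y <> r ->
  desc p d u (p y) -> desc p d u y.
Proof.
  intros HP Hy Hne (k & Hk & ->). destruct HP as (H1 & H2 & H3 & H4).
  destruct (H3 y Hy Hne) as [A B].
  exists (S k). split; [lia|]. rewrite Nat.iter_succ_r. reflexivity.
Qed.

Lemma desc_child {U} V E (r : U) p d u z : PS V E r p d -> V z -> z <> r ->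
  desc p d u z -> u <> z -> desc p d u (p z).
Proof.
  intros HP Hz Hne (k & Hk & ->) Hu. destruct k as [|k]; [simpl in Hu; congruence|].
  destruct HP as (H1 & H2 & H3 & H4). destruct (H3 z Hz Hne) as [A B].
  exists k. split; [lia|]. rewrite Nat.iter_succ_r. reflexivity.
Qed.

Lemma ps_up {U} V E (r : U) p d y l v : PS V E r p d ->
  tpath E y l v -> y <> r -> V y -> NoDup (p y :: l) -> forall w, In w l -> desc p d w v.
Proof.
  intros HP. induction 1 as [y|y z l v Hyz Hp IH]; intros Hne Hy ND w Hw.
  - destruct Hw as [<-|[]]. apply desc_refl.
  - pose proof HP as (H1 & H2 & H3 & H4).
    apply H4 in Hyz. destruct Hyz as (_ & Vz & [[_ ->]|[Hzr ->]]).
    + exfalso. inversion ND; subst. apply H5. right. eapply tpath_first_in; eauto.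
    + assert (Vv : V v) by (apply (tpath_V E V z l v); [intros a b Hab; apply H4 in Hab; tauto|auto|auto|eapply tpath_last_in; eauto]).
      assert (IH' : forall w, In w l -> desc p d w v).
      { apply IH; auto. inversion ND; subst. auto. }
      destruct Hw as [<-|Hw]; auto.
      apply (desc_parent V E r p d); auto. apply IH'. eapply tpath_first_in; eauto.
Qed.

Lemma ps_enter {U} V E (r : U) p d y l v u : PS V E r p d ->
  tpath E y l v -> V y -> ~ desc p d u y -> desc p d u v -> In u l.
Proof.
  intros HP. induction 1 as [y|y z l v Hyz Hp IH]; intros Vy Hn Hd.
  - contradiction.
  - pose proof HP as (H1 & H2 & H3 & H4).
    pose proof Hyz as Hyz'. apply H4 in Hyz'. destruct Hyz' as (_ & Vz & C).
    destruct (classic (desc p d u z)) as [Dz|Dz].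
    + destruct C as [[Hyr ->]|[Hzr ->]].
      * exfalso. apply Hn. apply (desc_of_parent V E r p d); auto.
      * destruct (classic (u = z)) as [->|Huz].
        -- right. eapply tpath_first_in; eauto.
        -- exfalso. apply Hn. apply (desc_child V E r p d); auto.
    + right. apply IH; auto.
Qed.

Lemma ps_unique {U} V E (r : U) p d u l1 v : PS V E r p d ->
  tpath E u l1 v -> NoDup l1 -> forall l2, tpath E u l2 v -> NoDup l2 -> l1 = l2.
Proof.
  intros HP. pose proof HP as (H1 & H2 & H3 & H4).
  assert (HEV : forall a b, E a b -> V a /\ V b) by (intros a b Hab; apply H4 in Hab; tauto).
  induction 1 as [u|u y l1 v Hy Hp IH]; intros N1 l2 P2 N2.
  - inversion P2 as [|a b c e Hab Hp]; subst; auto. exfalso. inversion N2 as [|a0 b0 Hn Hnd]; subst. apply Hn. eapply tpath_last_in; eauto.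
  - inversion P2 as [|u' y2 l2' v' Hy2 Hp2]; subst.
    + exfalso. inversion N1 as [|a0 b0 Hn Hnd]; subst. apply Hn. eapply tpath_last_in; eauto.
    + assert (y = y2).
      { assert (Vu : V u) by (apply (HEV _ _ Hy)).
        assert (Vv : V v) by (apply (tpath_V E V y l1 v); auto; [apply (HEV _ _ Hy)|eapply tpath_last_in; eauto]).
        assert (Cl : forall y0 l0, E u y0 -> tpath E y0 l0 v -> NoDup (u :: l0) ->
                  (y0 = p u /\ ~ desc p d u v) \/ (u = p y0 /\ y0 <> r /\ desc p d y0 v)).
        { intros y0 l0 E0 P0 N0. pose proof E0 as E0'. apply H4 in E0'.
          destruct E0' as (_ & V0 & [[Hur ->]|[H0r ->]]).
          - left. split; auto. intros Dv.
            assert (~ desc p d u (p u)).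
            { intros Dp. destruct (desc_VD V E r p d u (p u) HP V0 Dp) as (_ & L & _).
              destruct (H3 u Vu Hur). lia. }
            pose proof (ps_enter V E r p d _ _ _ u HP P0 V0 H Dv).
            inversion N0; subst; auto.
          - right. split; auto. split; auto.
            apply (ps_up V E r p d y0 l0 v HP P0 H0r V0 N0). eapply tpath_first_in; eauto. }
        destruct (Cl y l1 Hy Hp N1) as [[A B]|[A [B C]]];
        destruct (Cl y2 l2' Hy2 Hp2 N2) as [[A' B']|[A' [B' C']]].
        - congruence.
        - exfalso. apply B. rewrite A'. apply (desc_parent V E r p d); auto.
        - exfalso. apply B'. rewrite A. apply (desc_parent V E r p d); auto.
        - apply (desc_same_depth V E r p d y y2 v HP Vv C C').
          destruct (H3 y (proj2 (HEV _ _ Hy)) B) as [_ D1].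
          destruct (H3 y2 (proj2 (HEV _ _ Hy2)) B') as [_ D2]. congruence. }
      subst y2. f_equal. apply IH; auto.
      * inversion N1; auto.
      * inversion N2; auto.
Qed.

Lemma ps_path_root {U} V E (r : U) p d y : PS V E r p d -> V y ->
  exists l, tpath E y l r /\ NoDup l /\ (forall k, k <= d y -> In (Nat.iter k p y) l)
            /\ (forall w, In w l -> d w <= d y).
Proof.
  intros HP. pose proof HP as (H1 & H2 & H3 & H4).
  remember (d y) as n eqn:Hn. revert y Hn.
  induction n as [|n IH]; intros y Hn Vy.
  - assert (y = r) by (apply (ps_root V E r p d); auto). subst.
    exists [r]. split; [constructor|]. split; [repeat constructor; intros []|].
    split.
    + intros k Hk. assert (k = 0) by lia. subst. left; reflexivity.
    + intros w [<-|[]]. lia.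
  - assert (Hne : y <> r) by (intros ->; lia).
    destruct (H3 y Vy Hne) as [Vp Dp].
    destruct (IH (p y)) as (l & P & N & I & D); [lia|auto|].
    exists (y :: l). split; [econstructor; eauto; apply H4; tauto|].
    split; [constructor; auto; intros Hin; apply D in Hin; lia|].
    split.
    + intros k Hk. destruct k as [|k]; [left; reflexivity|]. right.
      rewrite Nat.iter_succ_r. apply I. lia.
    + intros w [<-|Hw]; [lia|]. apply D in Hw. lia.
Qed.

Lemma ps_rtree {U} (V : U -> Prop) E r p d : PS V E r p d -> is_rtree (RTree V E r).
Proof.
  intros HP. pose proof HP as (H1 & H2 & H3 & H4).
  assert (HEV : forall a b, E a b -> V a /\ V b) by (intros a b Hab; apply H4 in Hab; tauto).
  assert (Hs : forall a b, E a b -> E b a).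
  { intros a b Hab. apply H4 in Hab. apply H4. tauto. }
  unfold is_rtree; simpl. split; [auto|]. split.
  - intros x y Hxy. pose proof (HEV _ _ Hxy) as [Vx Vy]. split; auto. split; auto.
    intros Heq; subst y. apply H4 in Hxy. destruct Hxy as (_ & _ & [[Hr Hq]|[Hr Hq]]);
    destruct (H3 x Vx Hr) as [_ D]; rewrite <- Hq in D; lia.
  - split; [|auto].
    intros u v Vu Vv.
    destruct (ps_path_root V E r p d u HP Vu) as (l1 & P1 & _).
    destruct (ps_path_root V E r p d v HP Vv) as (l2 & P2 & _).
    apply (tpath_rev E) in P2; auto.
    assert (P : tpath E u (l1 ++ tl (rev l2)) v).
    { apply tpath_app with r; auto. destruct (tpath_head _ _ _ _ P2) as [l' Hl].
      rewrite Hl in *. simpl. auto. }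
    destruct (tpath_nodup E _ _ _ P) as (l & Pl & Nl).
    exists l. split; [auto|]. intros l' [P' N'].
    symmetry. apply (ps_unique V E r p d u l v HP Pl Nl l' P' N').
Qed.

Lemma ps_tle {U} (T : rtree U) p d x y : PS (tv T) (te T) (troot T) p d ->
  (tle T x y <-> tv T y /\ desc p d x y).
Proof.
  intros HP. pose proof HP as (H1 & H2 & H3 & H4).
  split.
  - intros (Vy & l & P & N & I). split; auto.
    inversion P as [a|a z l' b Haz Pz]; subst.
    + destruct I as [<-|[]]. apply desc_refl.
    + apply H4 in Haz. destruct Haz as (_ & Vz & [[Hr _]|[Hzr Hq]]); [congruence|].
      destruct I as [<-|I].
      * exists (d y). split; auto. symmetry. apply (ps_iter_root _ _ _ _ _ _ HP Vy).
      * apply (ps_up _ _ _ p d z l' y HP Pz Hzr Vz); auto. rewrite <- Hq. auto.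
  - intros (Vy & k & Hk & ->). split; auto.
    destruct (ps_path_root _ _ _ p d y HP Vy) as (l & P & N & I & _).
    exists (rev l). split; [apply tpath_rev; auto|].
    { intros a b Hab. apply H4 in Hab. apply H4. tauto. }
    split; [apply NoDup_rev; auto|]. apply in_rev. rewrite rev_involutive. apply I; auto.
Qed.

Lemma rtree_ps {U} (T : rtree U) : is_rtree T -> tv T (troot T) ->
  exists p d, PS (tv T) (te T) (troot T) p d.
Proof.
  intros (Hs & HEV & Hu & _) Hr. set (r := troot T) in *.
  assert (Hex : forall x, exists l, tv T x -> tpath (te T) x l r /\ NoDup l).
  { intros x. destruct (classic (tv T x)) as [Vx|Vx].
    - destruct (Hu x r Vx Hr) as (l & [P N] & _). exists l; auto.
    - exists []. intros; contradiction. }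
  pose (m := fun x => proj1_sig (constructive_indefinite_description _ (Hex x))).
  assert (Mspec : forall x, tv T x -> tpath (te T) x (m x) r /\ NoDup (m x)).
  { intros x Vx. exact (proj2_sig (constructive_indefinite_description _ (Hex x)) Vx). }
  assert (Muniq : forall x l, tv T x -> tpath (te T) x l r -> NoDup l -> l = m x).
  { intros x l Vx P N. destruct (Hu x r Vx Hr) as (l0 & _ & U0).
    rewrite (U0 l (conj P N)). symmetry. apply U0. apply Mspec; auto. }
  exists (fun x => match m x with _ :: y :: _ => y | _ => x end).
  exists (fun x => length (m x) - 1).
  assert (Mr : m r = [r]).
  { symmetry. apply Muniq; auto. constructor. repeat constructor. intros []. }
  assert (Step : forall x, tv T x -> x <> r -> exists y l, m x = x :: y :: l /\
             te T x y /\ m y = y :: l).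
  { intros x Vx Hne. destruct (Mspec x Vx) as [P N].
    remember (m x) as l0 eqn:Hl0.
    inversion P as [a Ha|a y l b Hxy Py Ha]; subst.
    - congruence.
    - destruct (tpath_head _ _ _ _ Py) as [l' Hl'].
      exists y, l'. rewrite <- Hl'. split; [congruence|]. split; auto.
      symmetry. apply Muniq; [apply (proj1 (proj2 (HEV _ _ Hxy)))|auto|].
      rewrite <- H0 in N. apply NoDup_cons_iff in N; tauto. }
  split; [auto|]. split; [rewrite Mr; reflexivity|]. split.
  - intros x Vx Hne. destruct (Step x Vx Hne) as (y & l & E1 & E2 & E3).
    rewrite E1, E3. split; [apply (HEV _ _ E2)|simpl; lia].
  - intros x y. split.
    + intros Hxy. destruct (HEV _ _ Hxy) as (Vx & Vy & Hne). split; auto. split; auto.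
      destruct (Mspec y Vy) as [Py Ny].
      destruct (classic (In x (m y))) as [Hin|Hnin].
      * right. destruct (tpath_split _ _ _ _ _ Py Hin) as (l1 & l2 & Heq & P1 & P2).
        assert (l1 ++ [x] = [y; x]).
        { destruct (Hu y x Vy Vx) as (l0 & _ & U0).
          rewrite (U0 (l1 ++ [x])). symmetry; apply U0.
          - split. econstructor; [apply Hs; eauto|constructor].
            constructor. intros [H|[]]; congruence. repeat constructor; intros [].
          - split; auto. rewrite Heq in Ny.
            replace (l1 ++ x :: l2) with ((l1 ++ [x]) ++ l2) in Ny by (rewrite <- app_assoc; reflexivity).
            apply NoDup_app_remove_r in Ny. auto. }
        change [y; x] with ([y] ++ [x]) in H. apply app_inj_tail in H. destruct H as [-> _].
        assert (Hmx : m x = x :: l2).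
        { symmetry. apply Muniq; auto. rewrite Heq in Ny. inversion Ny; auto. }
        assert (y <> r).
        { intros Hyr. rewrite Hyr in Heq. rewrite Mr in Heq. simpl in Heq. congruence. }
        split; auto. rewrite Heq. simpl. reflexivity.
      * left. assert (Hmx : m x = x :: m y).
        { symmetry. apply Muniq; auto. econstructor; eauto. constructor; auto. }
        destruct (tpath_head _ _ _ _ Py) as [l' Hl'].
        split.
        -- intros Hxr. rewrite Hxr in Hmx. rewrite Mr in Hmx. rewrite Hl' in Hmx. discriminate.
        -- rewrite Hmx, Hl'. reflexivity.
    + intros (Vx & Vy & [[Hne Hq]|[Hne Hq]]).
      * destruct (Step x Vx Hne) as (y' & l & E1 & E2 & E3). rewrite E1 in Hq. subst; auto.
      * destruct (Step y Vy Hne) as (x' & l & E1 & E2 & E3). rewrite E1 in Hq. subst; auto.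
Qed.

Lemma nat_min {U} (P : U -> Prop) (g : U -> nat) :
  (exists x, P x) -> exists x, P x /\ forall y, P y -> g x <= g y.
Proof.
  intros [x0 H0]. remember (g x0) as n eqn:Hn. revert x0 H0 Hn.
  induction n as [n IH] using lt_wf_ind. intros x0 H0 Hn.
  destruct (classic (exists y, P y /\ g y < g x0)) as [[y [Py Ly]]|Hno].
  - apply (IH (g y)) with y; auto. lia.
  - exists x0. split; auto. intros y Py. destruct (le_lt_dec (g x0) (g y)); auto.
    exfalso; apply Hno; eauto.
Qed.

Lemma nat_max {U} (P : U -> Prop) (g : U -> nat) B :
  (exists x, P x) -> (forall x, P x -> g x <= B) ->
  exists x, P x /\ forall y, P y -> g y <= g x.
Proof.
  intros [x0 H0] HB. remember (B - g x0) as n eqn:Hn. revert x0 H0 Hn.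
  induction n as [n IH] using lt_wf_ind. intros x0 H0 Hn.
  destruct (classic (exists y, P y /\ g x0 < g y)) as [[y [Py Ly]]|Hno].
  - apply (IH (B - g y)) with y; auto. pose proof (HB y Py). lia.
  - exists x0. split; auto. intros y Py. destruct (le_lt_dec (g y) (g x0)); auto.
    exfalso; apply Hno; eauto.
Qed.

Lemma list_bound {U} (l : list U) (g : U -> nat) : exists B, forall x, In x l -> g x <= B.
Proof.
  induction l as [|a l [B HB]].
  - exists 0. intros x [].
  - exists (max (g a) B). intros x [<-|Hx]; [lia|]. apply HB in Hx. lia.
Qed.

Lemma conn_union {U} (F : (U -> Prop) -> Prop) (A B : U -> Prop) :
  is_connectoid F -> connected F A -> connected F B -> (exists z, A z /\ B z) ->
  connected F (fun x => A x \/ B x).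
Proof.
  intros (_ & _ & Hu & _) CA CB [z [Az Bz]] x y Hx Hy.
  assert (Sub : forall C, subset C A \/ subset C B -> subset C (fun x => A x \/ B x)).
  { intros C [H|H] w Hw; [left|right]; apply H; auto. }
  destruct Hx as [Hx|Hx]; destruct Hy as [Hy|Hy].
  - destruct (CA x y Hx Hy) as (C & FC & SC & C1 & C2). exists C. auto.
  - destruct (CA x z Hx Az) as (C & FC & SC & C1 & C2).
    destruct (CB z y Bz Hy) as (D & FD & SD & D1 & D2).
    exists (fun w => C w \/ D w). split; [apply Hu; eauto|].
    split; [intros w [Hw|Hw]; [left; apply SC|right; apply SD]; auto|]. auto.
  - destruct (CB x z Hx Bz) as (C & FC & SC & C1 & C2).
    destruct (CA z y Az Hy) as (D & FD & SD & D1 & D2).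
    exists (fun w => C w \/ D w). split; [apply Hu; eauto|].
    split; [intros w [Hw|Hw]; [right; apply SC|left; apply SD]; auto|]. auto.
  - destruct (CB x y Hx Hy) as (C & FC & SC & C1 & C2). exists C. auto.
Qed.

Lemma F_conn {U} (F : (U -> Prop) -> Prop) A : F A -> connected F A.
Proof. intros FA x y Hx Hy. exists A. repeat split; auto. intros w; auto. Qed.

Lemma comp_eq {U} (F : (U -> Prop) -> Prop) S' K1 K2 : is_connectoid F ->
  component (connected F) S' K1 -> component (connected F) S' K2 ->
  (exists x, K1 x /\ K2 x) -> K1 = K2.
Proof.
  intros HF (S1 & C1 & _ & M1) (S2 & C2 & _ & M2) Hx.
  assert (CU : connected F (fun x => K1 x \/ K2 x)) by (apply conn_union; auto).
  assert (SU : subset (fun x => K1 x \/ K2 x) S') by (intros w [H|H]; auto).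
  extensionality w. apply propositional_extensionality. split; intros Hw.
  - apply (M2 (fun x => K1 x \/ K2 x)); auto; intros a Ha; auto.
  - apply (M1 (fun x => K1 x \/ K2 x)); auto; intros a Ha; auto.
Qed.

Lemma comp_cross {U} (F : (U -> Prop) -> Prop) S' K A : is_connectoid F ->
  component (connected F) S' K -> F A -> (exists k, K k /\ A k) -> (exists y, A y /\ ~ K y) ->
  exists z, A z /\ ~ S' z.
Proof.
  intros HF (SK & CK & _ & MK) FA Hk [y [Ay Ky]].
  apply NNPP. intros Hno. apply Ky.
  apply (MK (fun x => K x \/ A x)).
  - intros a Ha; auto.
  - intros a [Ha|Ha]; auto. apply NNPP. intros Hs. apply Hno. eauto.
  - apply conn_union; auto. apply F_conn; auto.
  - auto.
Qed.

Lemma tle_V {U} (T : rtree U) p d x y : PS (tv T) (te T) (troot T) p d ->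
  tle T x y -> tv T x /\ tv T y.
Proof.
  intros HP H. apply (ps_tle T p d) in H; auto. destruct H as [Vy D].
  destruct (desc_VD _ _ _ _ _ x y HP Vy D); auto.
Qed.

Lemma tle_refl {U} (T : rtree U) p d x : PS (tv T) (te T) (troot T) p d -> tv T x -> tle T x x.
Proof. intros HP Vx. apply (ps_tle T p d); auto. split; auto. apply desc_refl. Qed.

Lemma tle_trans {U} (T : rtree U) p d x y z : PS (tv T) (te T) (troot T) p d ->
  tle T x y -> tle T y z -> tle T x z.
Proof.
  intros HP H1 H2. apply (ps_tle T p d) in H1; auto. apply (ps_tle T p d) in H2; auto.
  apply (ps_tle T p d); auto. destruct H1 as [Vy D1]; destruct H2 as [Vz D2].
  split; auto. exact (desc_trans _ _ _ p d x y z HP Vz D1 D2).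
Qed.

Lemma tle_antisym {U} (T : rtree U) p d x y : PS (tv T) (te T) (troot T) p d ->
  tle T x y -> tle T y x -> x = y.
Proof.
  intros HP H1 H2. apply (ps_tle T p d) in H1; auto. apply (ps_tle T p d) in H2; auto.
  destruct H1 as [Vy D1]; destruct H2 as [Vx D2].
  exact (desc_antisym _ _ _ p d x y HP Vy D1 D2).
Qed.

Lemma tle_depth {U} (T : rtree U) p d x y : PS (tv T) (te T) (troot T) p d ->
  tle T x y -> d x <= d y /\ (d x = d y -> x = y).
Proof.
  intros HP H1. apply (ps_tle T p d) in H1; auto. destruct H1 as [Vy D].
  destruct (desc_VD _ _ _ _ _ x y HP Vy D) as (_ & A & B). auto.
Qed.

Definition wn1 {U} (Conn : (U -> Prop) -> Prop) (T : rtree U) : Prop :=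
  forall C, Conn C -> forall u v, C u -> C v -> tv T u -> tv T v ->
     ~ tle T u v -> ~ tle T v u -> exists w, C w /\ tle T w u /\ tle T w v.

Lemma attach {U} (F : (U -> Prop) -> Prop) (T : rtree U) p d K :
  is_connectoid F -> connected F (fun _ => True) -> PS (tv T) (te T) (troot T) p d ->
  wn1 (connected F) T ->
  component (connected F) (fun x => ~ tv T x) K -> finite_adhesion (connected F) (tv T) K ->
  exists t, tv T t /\
    (exists A, F A /\ A t /\ (exists k, K k /\ A k) /\ forall z, A z -> tv T z -> tle T t z) /\
    (forall A, F A -> (exists k, K k /\ A k) -> (exists y, A y /\ ~ K y) ->
       exists w, A w /\ tv T w /\ tle T w t).
Proof.
  intros HF HS HP HW HK (X & [lX HlX] & SX & HKX).
  pose proof HK as (SK & CK & [k0 Kk0] & MK).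
  set (cross := fun A => F A /\ (exists k, K k /\ A k) /\ (exists y, A y /\ ~ K y)).
  assert (crossX : forall A, cross A -> exists x, A x /\ X x).
  { intros A (FA & Hk & Hy). destruct (comp_cross F _ K A HF HKX FA Hk Hy) as [z [Az Hz]].
    exists z. split; auto. apply NNPP; auto. }
  assert (minA : forall A, cross A -> exists m, A m /\ tv T m /\ forall a, A a -> tv T a -> tle T m a).
  { intros A HA. destruct (nat_min (fun a => A a /\ tv T a) d) as (m & [Am Vm] & Mm).
    { destruct (crossX A HA) as [x [Ax Xx]]. exists x. split; auto. }
    exists m. split; auto. split; auto. intros a Aa Va.
    destruct (classic (tle T m a)) as [H|H]; auto. exfalso.
    destruct (classic (tle T a m)) as [H'|H'].
    - destruct (tle_depth T p d a m HP H') as [L Q]. pose proof (Mm a (conj Aa Va)).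
      apply H. rewrite Q by lia. apply (tle_refl T p d); auto.
    - destruct HA as (FA & _ & _).
      destruct (HW A (F_conn F A FA) m a Am Aa Vm Va H H') as (w & Aw & W1 & W2).
      destruct (tle_V T p d w m HP W1) as [Vw _].
      destruct (tle_depth T p d w m HP W1) as [L Q]. pose proof (Mm w (conj Aw Vw)).
      apply H. rewrite <- Q by lia. auto. }
  set (M := fun m => exists A, cross A /\ A m /\ tv T m /\ forall a, A a -> tv T a -> tle T m a).
  destruct (list_bound lX d) as [B HB].
  destruct (nat_max M d B) as (t & Mt & Tmax).
  { assert (Vr : tv T (troot T)) by (destruct HP; auto).
    destruct (HS k0 (troot T) I I) as (A & FA & _ & Ak & Ar).
    assert (cross A).
    { split; auto. split; eauto. exists (troot T). split; auto. intros Kr. apply (SK _ Kr); auto. }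
    destruct (minA A H) as (m & Am & Vm & Hm). exists m, A. auto. }
  { intros m (A & HA & Am & Vm & Hm). destruct (crossX A HA) as [x [Ax Xx]].
    pose proof (Hm x Ax (SX x Xx)). destruct (tle_depth T p d m x HP H) as [L _].
    pose proof (HB x (HlX x Xx)). lia. }
  assert (below : forall m, M m -> tle T m t).
  { intros m (A1 & HA1 & A1m & Vm & Hm1).
    destruct Mt as (A2 & HA2 & A2t & Vt & Ht2).
    destruct (classic (tle T m t)) as [H|H]; auto.
    destruct (classic (tle T t m)) as [H'|H'].
    - destruct (tle_depth T p d t m HP H') as [L Q].
      assert (d m <= d t) by (apply Tmax; exists A1; auto).
      rewrite Q by lia. apply (tle_refl T p d); auto.
    - exfalso.
      destruct HA1 as (FA1 & [k1 [Kk1 A1k1]] & _). destruct HA2 as (FA2 & [k2 [Kk2 A2k2]] & _).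
      set (C := fun x => (A1 x \/ K x) \/ A2 x).
      assert (CC : connected F C).
      { apply conn_union; auto.
        - apply conn_union; auto. apply F_conn; auto. eauto.
        - apply F_conn; auto.
        - exists k2; split; auto. }
      destruct (HW C CC m t (or_introl (or_introl A1m)) (or_intror A2t) Vm Vt H H')
        as (w & Cw & W1 & W2).
      destruct (tle_V T p d w m HP W1) as [Vw _].
      destruct Cw as [[Cw|Cw]|Cw].
      + pose proof (Hm1 w Cw Vw). assert (w = m) by (apply (tle_antisym T p d); auto).
        subst w. contradiction.
      + exact (SK w Cw Vw).
      + pose proof (Ht2 w Cw Vw). assert (w = t) by (apply (tle_antisym T p d); auto).
        subst w. contradiction. }
  exists t. destruct Mt as (A0 & HA0 & A0t & Vt & Ht0). split; auto. split.
  - exists A0. destruct HA0 as (FA0 & Hk & _). auto.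
  - intros A FA Hk Hy. destruct (minA A (conj FA (conj Hk Hy))) as (m & Am & Vm & Hm).
    exists m. split; auto. split; auto. apply below. exists A. split; [split; auto|]. auto.
Qed.

Lemma ps_rooted_up {U} V E (r : U) p d (f : nat -> U) : PS V E r p d ->
  (forall n, E (f n) (f (S n))) -> (forall m n, f m = f n -> m = n) -> f 0 = r ->
  forall m, f (S m) <> r /\ p (f (S m)) = f m.
Proof.
  intros (H1 & H2 & H3 & H4) HE Hi H0. induction m as [|m IH].
  - pose proof (HE 0) as E0. apply H4 in E0. rewrite H0 in E0.
    destruct E0 as (_ & _ & [[Hc _]|[Hn Hq]]); [congruence|]. rewrite H0; auto.
  - pose proof (HE (S m)) as E0. apply H4 in E0.
    destruct E0 as (_ & _ & [[Hn Hq]|[Hn Hq]]).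
    + exfalso. destruct IH as [_ IH]. rewrite IH in Hq. apply Hi in Hq. lia.
    + auto.
Qed.

Lemma ps_ray_up {U} V E (r : U) p d (f : nat -> U) : PS V E r p d ->
  (forall n, E (f n) (f (S n))) -> (forall m n, f m = f n -> m = n) ->
  exists m0, forall j, f (S (m0 + j)) <> r /\ p (f (S (m0 + j))) = f (m0 + j).
Proof.
  intros HP HE Hi. pose proof HP as (H1 & H2 & H3 & H4).
  destruct (classic (exists m, f (S m) <> r /\ p (f (S m)) = f m)) as [[m0 Hm0]|Hno].
  - exists m0. induction j as [|j IH].
    + rewrite Nat.add_0_r. auto.
    + pose proof (HE (S (m0 + j))) as E0. apply H4 in E0.
      destruct E0 as (_ & _ & [[Hn Hq]|[Hn Hq]]).
      * exfalso. destruct IH as [_ IH]. rewrite IH in Hq. apply Hi in Hq. lia.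
      * rewrite <- plus_n_Sm. auto.
  - exfalso.
    assert (Dn : forall m, d (f m) + m = d (f 0)).
    { induction m as [|m IH]; [lia|].
      pose proof (HE m) as E0. apply H4 in E0.
      destruct E0 as (Vm & _ & [[Hn Hq]|[Hn Hq]]).
      - destruct (H3 _ Vm Hn) as [_ D]. rewrite <- Hq in D. lia.
      - exfalso. apply Hno. eauto. }
    pose proof (Dn (S (d (f 0)))). lia.
Qed.

Theorem proposition6p3 (S : Type) (F : (S -> Prop) -> Prop) (r : S)
  (T : rtree S) (TK : (S -> Prop) -> rtree S) :
  is_connectoid F ->
  connected F (fun _ => True) ->
  normal_tree (fun _ => True) (connected F) T ->
  troot T = r -> tv T r ->
  (forall K, component (connected F) (fun x => ~ tv T x) K ->
     finite_adhesion (connected F) (tv T) K) ->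
  (forall K, component (connected F) (fun x => ~ tv T x) K ->
     normal_tree K (induced_conn (connected F) K) (TK K)) ->
  exists T' : rtree S,
    normal_tree (fun _ => True) (connected F) T' /\
    troot T' = r /\ tv T' r /\
    subtree T T' /\
    (forall x, tv T' x /\ ~ tv T x <->
       exists K, component (connected F) (fun x => ~ tv T x) K /\ tv (TK K) x) /\
    (forall x y, ~ tv T x -> ~ tv T y ->
       (te T' x y <->
        exists K, component (connected F) (fun x => ~ tv T x) K /\ te (TK K) x y)) /\
    (rayless T ->
     (forall K, component (connected F) (fun x => ~ tv T x) K -> rayless (TK K)) ->
     rayless T').
Proof.
  intros HF HS [HWT HNT] Hroot Hr HFA HTK. subst r.
  destruct HWT as (RT & _ & W1T & W2T).
  set (R := troot T) in *.
  destruct (rtree_ps T RT Hr) as (pT & dT & PT).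
  set (comp := fun K => component (connected F) (fun x => ~ tv T x) K) in *.
  assert (Hsub : forall K x, comp K -> tv (TK K) x -> K x).
  { intros K x HK Hx. destruct (HTK K HK) as ((_ & Hs & _) & _). apply Hs; auto. }
  assert (HKT : forall K x, comp K -> K x -> ~ tv T x).
  { intros K x (SK & _) Kx. apply SK; auto. }
  assert (Huniq : forall K1 K2 x, comp K1 -> comp K2 -> K1 x -> K2 x -> K1 = K2).
  { intros K1 K2 x H1 H2 X1 X2. apply (comp_eq F _ K1 K2 HF H1 H2). eauto. }
  set (Att := fun K t => tv T t /\
    (exists A, F A /\ A t /\ (exists k, K k /\ A k) /\ forall z, A z -> tv T z -> tle T t z) /\
    (forall A, F A -> (exists k, K k /\ A k) -> (exists y, A y /\ ~ K y) ->
       exists w, A w /\ tv T w /\ tle T w t)).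
  assert (Hatt : forall K, exists t, comp K -> Att K t).
  { intros K. destruct (classic (comp K)) as [HK|HK].
    - destruct (attach F T pT dT K HF HS PT W1T HK (HFA K HK)) as [t Ht]. exists t; auto.
    - exists R; intros; contradiction. }
  pose (tK := fun K => proj1_sig (constructive_indefinite_description _ (Hatt K))).
  assert (tKs : forall K, comp K -> Att K (tK K)).
  { intros K. exact (proj2_sig (constructive_indefinite_description _ (Hatt K))). }
  assert (Hpk : forall K, exists pd : (S -> S) * (S -> nat), comp K -> (exists x, tv (TK K) x) ->
             PS (tv (TK K)) (te (TK K)) (troot (TK K)) (fst pd) (snd pd)).
  { intros K. destruct (classic (comp K /\ exists x, tv (TK K) x)) as [[HK Hne]|Hn].
    - destruct (HTK K HK) as ((RK & _) & _).
      assert (tv (TK K) (troot (TK K))) by (apply RK; auto).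
      destruct (rtree_ps (TK K) RK H) as (p & d & P). exists (p, d). auto.
    - exists (fun x => x, fun _ => 0). intros; exfalso; auto. }
  pose (pK := fun K => fst (proj1_sig (constructive_indefinite_description _ (Hpk K)))).
  pose (dK := fun K => snd (proj1_sig (constructive_indefinite_description _ (Hpk K)))).
  assert (PK : forall K x, comp K -> tv (TK K) x ->
             PS (tv (TK K)) (te (TK K)) (troot (TK K)) (pK K) (dK K)).
  { intros K x HK Hx. exact (proj2_sig (constructive_indefinite_description _ (Hpk K)) HK (ex_intro _ x Hx)). }
  assert (Hkof : forall x, exists K, (exists K', comp K' /\ tv (TK K') x) -> comp K /\ tv (TK K) x).
  { intros x. destruct (classic (exists K', comp K' /\ tv (TK K') x)) as [[K' H]|H].
    - exists K'; auto.
    - exists (fun _ => False); intros; contradiction. }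
  pose (kof := fun x => proj1_sig (constructive_indefinite_description _ (Hkof x))).
  assert (kofs : forall K x, comp K -> tv (TK K) x -> kof x = K).
  { intros K x HK Hx.
    destruct (proj2_sig (constructive_indefinite_description _ (Hkof x)) (ex_intro _ K (conj HK Hx)))
      as [H1 H2].
    apply (Huniq _ _ x H1 HK); apply Hsub; auto. }
  assert (blkT : forall K x, comp K -> tv (TK K) x -> ~ tv T x).
  { intros K x HK Hx. apply (HKT K); [auto|apply Hsub; auto]. }
  pose (p' := fun x => match excluded_middle_informative (tv T x) with
                | left _ => pT x
                | right _ => match excluded_middle_informative (x = troot (TK (kof x))) with
                             | left _ => tK (kof x) | right _ => pK (kof x) x end end).
  pose (d' := fun x => match excluded_middle_informative (tv T x) with
                | left _ => dT x
                | right _ => dT (tK (kof x)) + Datatypes.S (dK (kof x) x) end).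
  assert (p'T : forall x, tv T x -> p' x = pT x).
  { intros x Hx. unfold p'. destruct (excluded_middle_informative (tv T x)); tauto. }
  assert (d'T : forall x, tv T x -> d' x = dT x).
  { intros x Hx. unfold d'. destruct (excluded_middle_informative (tv T x)); tauto. }
  assert (p'R : forall K x, comp K -> tv (TK K) x -> x = troot (TK K) -> p' x = tK K).
  { intros K x HK Hx Hq. unfold p'. destruct (excluded_middle_informative (tv T x)) as [h|h].
    - exfalso; apply (blkT K x); auto.
    - rewrite (kofs K x HK Hx). destruct (excluded_middle_informative (x = troot (TK K))); tauto. }
  assert (p'K : forall K x, comp K -> tv (TK K) x -> x <> troot (TK K) -> p' x = pK K x).
  { intros K x HK Hx Hq. unfold p'. destruct (excluded_middle_informative (tv T x)) as [h|h].
    - exfalso; apply (blkT K x); auto.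
    - rewrite (kofs K x HK Hx). destruct (excluded_middle_informative (x = troot (TK K))); tauto. }
  assert (d'K : forall K x, comp K -> tv (TK K) x -> d' x = dT (tK K) + Datatypes.S (dK K x)).
  { intros K x HK Hx. unfold d'. destruct (excluded_middle_informative (tv T x)) as [h|h].
    - exfalso; apply (blkT K x); auto.
    - rewrite (kofs K x HK Hx). reflexivity. }
  clearbody p' d' kof pK dK tK.
  set (V' := fun x => tv T x \/ exists K, comp K /\ tv (TK K) x).
  set (E' := fun x y => V' x /\ V' y /\ ((x <> R /\ y = p' x) \/ (y <> R /\ x = p' y))).
  set (T' := RTree V' E' R).
  assert (PS' : PS (tv T') (te T') (troot T') p' d').
  { simpl. split; [left; auto|]. split.
    { rewrite d'T by auto. destruct PT as (_ & H & _); auto. }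
    split; [|intros; unfold E'; tauto].
    intros x [Hx|(K & HK & Hx)] Hne.
    - destruct PT as (_ & _ & H3 & _). destruct (H3 x Hx Hne) as [A B].
      rewrite p'T, d'T, d'T by auto. split; auto. left; auto.
    - pose proof (PK K x HK Hx) as PKK. pose proof PKK as (K1 & K2 & K3 & K4).
      destruct (tKs K HK) as (Vt & _).
      destruct (classic (x = troot (TK K))) as [Hq|Hq].
      + rewrite (p'R K x HK Hx Hq). split; [left; auto|].
        rewrite (d'K K x HK Hx), (d'T _ Vt). rewrite Hq, K2. lia.
      + rewrite (p'K K x HK Hx Hq). destruct (K3 x Hx Hq) as [A B].
        split; [right; eauto|].
        rewrite (d'K K x HK Hx), (d'K K _ HK A). lia. }
  assert (RT' : is_rtree T') by (apply (ps_rtree _ _ _ _ _ PS')).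
  assert (iterT : forall y k, tv T y -> k <= dT y -> Nat.iter k p' y = Nat.iter k pT y).
  { intros y k Vy. induction k as [|k IH]; intros Hk; [reflexivity|].
    simpl. rewrite IH by lia. apply p'T. apply (ps_iter _ _ _ _ _ y k PT Vy). lia. }
  assert (tleT' : forall x y, tv T y -> (tle T' x y <-> tle T x y)).
  { intros x y Vy. rewrite (ps_tle T' p' d' x y PS'), (ps_tle T pT dT x y PT).
    change (tv T' y) with (V' y). unfold desc. rewrite (d'T y Vy). split.
    - intros [_ (k & Hk & ->)]. split; auto. exists k. split; auto.
    - intros [_ (k & Hk & ->)]. split; [left; auto|]. exists k. split; auto. symmetry; apply iterT; auto. }
  assert (iterK : forall K y k, comp K -> tv (TK K) y -> k <= dK K y ->
            Nat.iter k p' y = Nat.iter k (pK K) y).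
  { intros K y k HK Vy. pose proof (PK K y HK Vy) as PKK. induction k as [|k IH]; intros Hk; [reflexivity|].
    simpl. rewrite IH by lia.
    destruct (ps_iter _ _ _ _ _ y k PKK Vy) as [A B]; [lia|].
    apply p'K; auto. intros Hq. destruct PKK as (_ & K2 & _). rewrite Hq, K2 in B. lia. }
  assert (iterK2 : forall K y j, comp K -> tv (TK K) y -> j <= dT (tK K) ->
            Nat.iter (j + Datatypes.S (dK K y)) p' y = Nat.iter j pT (tK K)).
  { intros K y j HK Vy Hj. pose proof (PK K y HK Vy) as PKK.
    rewrite Nat.iter_add. simpl. rewrite (iterK K y (dK K y) HK Vy (le_n _)).
    rewrite (ps_iter_root _ _ _ _ _ y PKK Vy).
    destruct PKK as (K1 & _).
    rewrite (p'R K _ HK K1 eq_refl). apply iterT; auto. apply tKs; auto. }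
  assert (tleK' : forall K x y, comp K -> tv (TK K) y ->
            (tle T' x y <-> tle (TK K) x y \/ tle T x (tK K))).
  { intros K x y HK Vy. pose proof (PK K y HK Vy) as PKK.
    destruct (tKs K HK) as (Vt & _).
    rewrite (ps_tle T' p' d' x y PS'), (ps_tle (TK K) (pK K) (dK K) x y PKK), (ps_tle T pT dT x _ PT).
    change (tv T' y) with (V' y). unfold desc. rewrite (d'K K y HK Vy). split.
    - intros [_ (k & Hk & ->)]. destruct (le_lt_dec k (dK K y)) as [L|L].
      + left. split; auto. exists k. split; auto.
      + right. split; auto. exists (k - Datatypes.S (dK K y)). split; [lia|].
        rewrite <- (iterK2 K y) by (auto; lia). f_equal. lia.
    - intros [[_ (k & Hk & ->)]|[_ (j & Hj & ->)]].
      + split; [right; eauto|]. exists k. split; [lia|]. symmetry; apply iterK; auto.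
      + split; [right; eauto|]. exists (j + Datatypes.S (dK K y)). split; [lia|]. symmetry; apply iterK2; auto. }
  assert (TKrt : forall K, comp K -> is_rtree (TK K)).
  { intros K HK. destruct (HTK K HK) as ((RK & _) & _). auto. }
  assert (HTE : forall x y, te T x y <-> tv T x /\ tv T y /\ ((x <> R /\ y = pT x) \/ (y <> R /\ x = pT y))).
  { destruct PT as (_ & _ & _ & H4). exact H4. }
  assert (RnotK : forall K x, comp K -> tv (TK K) x -> x <> R).
  { intros K x HK Hx Hq. apply (blkT K x HK Hx). rewrite Hq. auto. }
  assert (EdgeK : forall x y, ~ tv T x -> ~ tv T y ->
       (te T' x y <-> exists K, comp K /\ te (TK K) x y)).
  { intros x y Hx Hy. change (te T' x y) with (E' x y). unfold E'. split.
    - intros ([Vx|(Kx & HKx & Vx)] & [Vy|(Ky & HKy & Vy)] & C); try contradiction.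
      destruct C as [[Hne Hq]|[Hne Hq]].
      + exists Kx. split; auto. pose proof (PK Kx x HKx Vx) as (_ & _ & K3 & K4).
        destruct (classic (x = troot (TK Kx))) as [Hr'|Hr'].
        * exfalso. rewrite (p'R Kx x HKx Vx Hr') in Hq. apply Hy. rewrite Hq. apply tKs; auto.
        * rewrite (p'K Kx x HKx Vx Hr') in Hq. apply K4. split; auto.
          split; [subst y; apply K3; auto|]. left; auto.
      + exists Ky. split; auto. pose proof (PK Ky y HKy Vy) as (_ & _ & K3 & K4).
        destruct (classic (y = troot (TK Ky))) as [Hr'|Hr'].
        * exfalso. rewrite (p'R Ky y HKy Vy Hr') in Hq. apply Hx. rewrite Hq. apply tKs; auto.
        * rewrite (p'K Ky y HKy Vy Hr') in Hq. apply K4. split; [subst x; apply K3; auto|].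
          split; auto.
    - intros (K & HK & Exy). destruct (TKrt K HK) as (_ & HEV & _).
      destruct (HEV x y Exy) as (Vx & Vy & _).
      pose proof (PK K x HK Vx) as (_ & _ & K3 & K4).
      apply K4 in Exy. destruct Exy as (_ & _ & [[Hne Hq]|[Hne Hq]]).
      + split; [right; eauto|]. split; [right; eauto|]. left. split; [apply (RnotK K); auto|].
        rewrite (p'K K x HK Vx Hne). auto.
      + split; [right; eauto|]. split; [right; eauto|]. right. split; [apply (RnotK K); auto|].
        rewrite (p'K K y HK Vy Hne). auto. }
  assert (EdgeT : forall x y, tv T x -> tv T y -> (te T' x y <-> te T x y)).
  { intros x y Vx Vy. change (te T' x y) with (E' x y). unfold E'. rewrite HTE.
    rewrite (p'T x Vx), (p'T y Vy). split.
    - intros (_ & _ & C). auto.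
    - intros (_ & _ & C). split; [left; auto|]. split; [left; auto|]. auto. }
  assert (UpRay : forall g : nat -> S, (forall j, V' (g j)) ->
     (forall j, g (Datatypes.S j) <> R /\ p' (g (Datatypes.S j)) = g j) ->
     (forall a b, g a = g b -> a = b) ->
     (forall j, tv T (g j)) \/ exists n K, comp K /\ (forall j, j < n -> tv T (g j)) /\
        (forall j, tv (TK K) (g (n + j))) /\
        (forall j, te (TK K) (g (n + j)) (g (Datatypes.S (n + j))))).
  { intros g HV Hup Hi. destruct (classic (forall j, tv T (g j))) as [H|H]; [left; auto|right].
    apply not_all_ex_not in H.
    destruct (nat_min (fun j => ~ tv T (g j)) (fun j => j) H) as (n & Hn & Mn).
    destruct (HV n) as [Tn|(K & HK & Kn)]; [contradiction|].
    assert (Hblk : forall j, tv (TK K) (g (n + j))).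
    { induction j as [|j IH]; [rewrite Nat.add_0_r; auto|].
      rewrite <- plus_n_Sm. destruct (Hup (n + j)) as [Hne Hq].
      destruct (HV (Datatypes.S (n + j))) as [Tj|(K' & HK' & Kj)].
      - exfalso. rewrite (p'T _ Tj) in Hq. apply (blkT K (g (n+j)) HK IH). rewrite <- Hq.
        destruct PT as (_ & _ & H3 & _). apply H3; auto.
      - destruct (classic (g (Datatypes.S (n+j)) = troot (TK K'))) as [Hr'|Hr'].
        + exfalso. rewrite (p'R K' _ HK' Kj Hr') in Hq. apply (blkT K _ HK IH). rewrite <- Hq. apply tKs; auto.
        + rewrite (p'K K' _ HK' Kj Hr') in Hq. pose proof (PK K' _ HK' Kj) as (_ & _ & K3 & _).
          destruct (K3 _ Kj Hr') as [A _]. rewrite Hq in A.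
          assert (K' = K) by (apply (Huniq K' K (g (n+j))); auto; apply Hsub; auto).
          subst K'. auto. }
    exists n, K. split; auto. split.
    { intros j Hj. apply NNPP. intros Hc. pose proof (Mn j Hc). lia. }
    split; auto.
    intros j. pose proof (Hblk j) as B0. pose proof (Hblk (Datatypes.S j)) as B1.
    rewrite <- plus_n_Sm in B1.
    destruct (Hup (n + j)) as [Hne Hq].
    pose proof (PK K _ HK B0) as (_ & _ & K3 & K4).
    destruct (classic (g (Datatypes.S (n+j)) = troot (TK K))) as [Hr'|Hr'].
    - exfalso. rewrite (p'R K _ HK B1 Hr') in Hq. apply (blkT K _ HK B0). rewrite <- Hq. apply tKs; auto.
    - rewrite (p'K K _ HK B1 Hr') in Hq. apply K4. split; auto. }
  assert (anchor : forall C z, connected F C -> C z -> tv T' z ->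
     (forall K, comp K -> tv (TK K) z -> exists y, C y /\ ~ K y) ->
     exists w, C w /\ tv T w /\ tle T' w z).
  { intros C z CC Cz Vz Hy. change (tv T' z) with (V' z) in Vz.
    destruct Vz as [Tz|(K & HK & Kz)].
    - exists z. split; auto. split; auto. apply (tle_refl T' p' d'); auto. left; auto.
    - destruct (Hy K HK Kz) as (y & Cy & Ky). destruct (CC z y Cz Cy) as (A & FA & SA & Az & Ay).
      destruct (tKs K HK) as (_ & _ & A3).
      destruct (A3 A FA (ex_intro _ z (conj (Hsub K z HK Kz) Az)) (ex_intro _ y (conj Ay Ky)))
        as (w & Aw & Tw & Hw).
      exists w. split; [apply SA; auto|]. split; auto. apply (tleK' K w z HK Kz). right; auto. }
  assert (comb : forall C u v w1 w2, connected F C -> C w1 -> C w2 -> tv T w1 -> tv T w2 ->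
     tle T' w1 u -> tle T' w2 v -> exists w, C w /\ tle T' w u /\ tle T' w v).
  { intros C u v w1 w2 CC C1 C2 T1 T2 L1 L2. destruct (classic (tle T w1 w2)) as [H|H].
    - exists w1. split; auto. split; auto. apply (tle_trans T' p' d' w1 w2 v PS'); auto.
      apply tleT'; auto.
    - destruct (classic (tle T w2 w1)) as [H'|H'].
      + exists w2. split; auto. split; [|auto]. apply (tle_trans T' p' d' w2 w1 u PS'); auto.
        apply tleT'; auto.
      + destruct (W1T C CC w1 w2 C1 C2 T1 T2 H H') as (w & Cw & A & B).
        exists w. split; auto. split.
        * apply (tle_trans T' p' d' w w1 u PS'); auto. apply tleT'; auto.
        * apply (tle_trans T' p' d' w w2 v PS'); auto. apply tleT'; auto. }
  assert (WN1 : forall C, connected F C -> forall u v, C u -> C v -> tv T' u -> tv T' v ->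
     ~ tle T' u v -> ~ tle T' v u -> exists w, C w /\ tle T' w u /\ tle T' w v).
  { intros C CC u v Cu Cv Vu Vv Nuv Nvu.
    destruct (classic (exists K, comp K /\ tv (TK K) u /\ tv (TK K) v /\ subset C K))
      as [(K & HK & Ku & Kv & SC)|Hno].
    - destruct (HTK K HK) as ((_ & _ & W1K & _) & _).
      destruct (W1K C (conj CC SC) u v Cu Cv Ku Kv) as (w & Cw & A & B).
      + intro H; apply Nuv. apply (tleK' K u v HK Kv). left; auto.
      + intro H; apply Nvu. apply (tleK' K v u HK Ku). left; auto.
      + exists w. split; auto. split; [apply (tleK' K w u HK Ku)|apply (tleK' K w v HK Kv)]; left; auto.
    - assert (Hy : forall z z', (z = u /\ z' = v) \/ (z = v /\ z' = u) ->
                forall K, comp K -> tv (TK K) z -> exists y, C y /\ ~ K y).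
      { intros z z' Hzz K HK Kz. apply NNPP. intros Hn. apply Hno. exists K.
        assert (SC : subset C K) by (intros y Cy; apply NNPP; intros Ky; apply Hn; eauto).
        assert (Cz' : C z') by (destruct Hzz as [[-> ->]|[-> ->]]; auto).
        assert (Vz' : V' z') by (destruct Hzz as [[-> ->]|[-> ->]]; auto).
        assert (Kz' : tv (TK K) z').
        { destruct Vz' as [T'z|(K' & HK' & K'z)].
          - exfalso. apply (HKT K z' HK); auto.
          - assert (K' = K) by (apply (Huniq K' K z'); auto; apply Hsub; auto). subst; auto. }
        destruct Hzz as [[-> ->]|[-> ->]]; auto. }
      destruct (anchor C u CC Cu Vu (Hy u v (or_introl (conj eq_refl eq_refl)))) as (w1 & C1 & T1 & L1).
      destruct (anchor C v CC Cv Vv (Hy v u (or_intror (conj eq_refl eq_refl)))) as (w2 & C2 & T2 & L2).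
      apply (comb C u v w1 w2); auto. }
  assert (WN2 : forall u v, tv T' u -> tv T' v -> tle T' u v ->
     exists C, connected F C /\ C u /\ C v /\ (forall x, C x -> ~ tlt T' x u)).
  { intros u v Vu Vv Huv. change (tv T' v) with (V' v) in Vv.
    destruct Vv as [Tv|(K & HK & Kv)].
    - apply (tleT' u v Tv) in Huv. destruct (tle_V T pT dT u v PT Huv) as [Tu _].
      destruct (W2T u v Tu Tv Huv) as (C & CC & Cu & Cv & HC).
      exists C. split; auto. split; auto. split; auto.
      intros x Cx [Hle Hne]. apply (HC x Cx). split; auto. apply tleT'; auto.
    - pose proof (PK K v HK Kv) as PKK. apply (tleK' K u v HK Kv) in Huv. destruct Huv as [Huv|Huv].
      + destruct (HTK K HK) as ((_ & _ & _ & W2K) & _).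
        destruct (tle_V (TK K) (pK K) (dK K) u v PKK Huv) as [Ku _].
        destruct (W2K u v Ku Kv Huv) as (C & [CC SC] & Cu & Cv & HC).
        exists C. split; auto. split; auto. split; auto.
        intros x Cx [Hle Hne]. apply (tleK' K x u HK Ku) in Hle. destruct Hle as [Hle|Hle].
        * apply (HC x Cx). split; auto.
        * destruct (tle_V T pT dT x _ PT Hle) as [Tx _]. apply (HKT K x HK); auto.
      + destruct (tle_V T pT dT u _ PT Huv) as [Tu Tt].
        destruct (W2T u (tK K) Tu Tt Huv) as (C1 & CC1 & C1u & C1t & HC1).
        destruct (tKs K HK) as (_ & (A0 & FA0 & A0t & (k & Kk & A0k) & HA0) & _).
        pose proof HK as (SK & CK & _).
        exists (fun x => (C1 x \/ A0 x) \/ K x). split.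
        { apply conn_union; auto.
          - apply conn_union; auto. apply F_conn; auto. eauto.
          - exists k. split; auto. }
        split; [left; left; auto|]. split; [right; apply Hsub; auto|].
        intros x Cx [Hle Hne]. apply (tleT' x u Tu) in Hle.
        destruct (tle_V T pT dT x u PT Hle) as [Tx _].
        destruct Cx as [[Cx|Cx]|Cx].
        * apply (HC1 x Cx). split; auto.
        * apply Hne. apply (tle_antisym T pT dT); auto.
          apply (tle_trans T pT dT u (tK K) x PT); auto.
        * apply (HKT K x HK); auto. }

  exists T'.
  split.
  { split; [split; [exact RT'|]; split; [intros x _; exact I|]; split; [exact WN1|exact WN2]|].
    intros f [[HE Hi] H0].
    assert (HVf : forall j, V' (f j)).
    { intros j. pose proof (HE j) as E0. change (te T' _ _) with (E' (f j) (f (Datatypes.S j))) in E0.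
      destruct E0; auto. }
    pose proof (ps_rooted_up _ _ _ _ _ f PS' HE Hi H0) as Hup.
    destruct (UpRay f HVf Hup Hi) as [AllT|(n & K & HK & Bn & Bk & Be)].
    - apply HNT. split; [split|]; auto.
      intros j. destruct (Hup j) as [Hne Hq]. apply HTE.
      split; auto. split; auto. right. split; auto. rewrite <- (p'T _ (AllT _)). auto.
    - destruct n as [|n].
      + exfalso. pose proof (Bk 0) as B. simpl in B. rewrite H0 in B. apply (blkT K R HK B). auto.
      + assert (Tn : tv T (f n)) by (apply Bn; lia).
        assert (Hroot : f (Datatypes.S n) = troot (TK K)).
        { pose proof (Bk 0) as B. rewrite Nat.add_0_r in B.
          apply NNPP. intros Hne. destruct (Hup n) as [_ Hq].
          rewrite (p'K K _ HK B Hne) in Hq.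
          pose proof (PK K _ HK B) as (_ & _ & K3 & _). destruct (K3 _ B Hne) as [A _].
          rewrite Hq in A. apply (blkT K _ HK A). auto. }
        destruct (HTK K HK) as (_ & HNK).
        destruct (HNK (fun j => f (Datatypes.S n + j))) as (N & [CN (H & HH & HN & HI)] & n0 & Hn0).
        { split; [split|].
          - intros j. rewrite <- plus_n_Sm. apply Be.
          - intros a b Hab. apply Hi in Hab. lia.
          - simpl. rewrite Nat.add_0_r. auto. }
        exists N. split.
        * split; [destruct CN; auto|]. exists H. split; [|split; auto].
          intros j. destruct (HH j) as [Hf [Hc _]]. auto.
        * exists (Datatypes.S n + n0). intros m Hm.
          replace m with (Datatypes.S n + (m - Datatypes.S n)) by lia. apply Hn0. lia. }
  split; [reflexivity|]. split; [left; auto|].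
  split.
  { split; [intros x Hx; left; auto|]. intros x y Exy.
    destruct (proj1 (HTE x y) Exy) as (Vx & Vy & _). apply EdgeT; auto. }
  split.
  { intros x. change (tv T' x) with (V' x). unfold V'. split.
    - intros [[H|H] H']; [contradiction|auto].
    - intros (K & HK & Hx). split; [right; eauto|]. apply (blkT K); auto. }
  split; [exact EdgeK|].
  intros RLT RLK f [HE Hi].
  destruct (ps_ray_up _ _ _ _ _ f PS' HE Hi) as [m0 Hm0].
  set (g := fun j => f (m0 + j)).
  assert (HVg : forall j, V' (g j)).
  { intros j. pose proof (HE (m0 + j)) as E0. change (te T' _ _) with (E' (f (m0 + j)) (f (Datatypes.S (m0 + j)))) in E0.
    destruct E0; auto. }
  assert (Hup : forall j, g (Datatypes.S j) <> R /\ p' (g (Datatypes.S j)) = g j).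
  { intros j. unfold g. rewrite <- plus_n_Sm. apply Hm0. }
  assert (Hig : forall a b, g a = g b -> a = b).
  { intros a b Hab. apply Hi in Hab. lia. }
  destruct (UpRay g HVg Hup Hig) as [AllT|(n & K & HK & Bn & Bk & Be)].
  - apply (RLT g). split; auto.
    intros j. destruct (Hup j) as [Hne Hq]. apply HTE.
    split; auto. split; auto. right. split; auto. rewrite <- (p'T _ (AllT _)). auto.
  - apply (RLK K HK (fun j => g (n + j))). split.
    + intros j. rewrite <- plus_n_Sm. apply Be.
    + intros a b Hab. apply Hig in Hab. lia.
Qed.
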